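(* Under the setting where $\widehat E_\varGamma\subseteq E_\varGamma$ is obtained by including each edge independently with probability $p\in(0,1]$ and $\widehat C_M=\frac{1}{pl}\sum_{e\in\widehat E_\varGamma}\eta(e)$, for every $\varepsilon>0$ (and assuming $C_M>0$), $$\Pr\big[|\widehat C_M-C_M|\ge\varepsilon C_M\big]\le\frac{1-p}{p\varepsilon^2}.$$
   Context: A temporal graph $\varGamma=(V_\varGamma,E_\varGamma)$ consists of a finite vertex set $V_\varGamma$ and a finite sequence $E_\varGamma$ of $m$ temporal edges $e=(u,v,t)$ with $u,v\in V_\varGamma$ and timestamp $t\in\mathbb{R}^+$; timestamps are pairwise distinct. A temporal motif $M$ is an ordered sequence of $l$ directed edges $\langle e'_1=(u'_1,v'_1),\dots,e'_l=(u'_l,v'_l)\rangle$ on a vertex set $V_M$ of $k$ vertices, whose underlying graph is connected. Fix $\delta\ge0$. A sequence $S=\langle (w_1,x_1,t_1),\dots,(w_l,x_l,t_l)\rangle$ of $l$ edges of $E_\varGamma$ with $t_1<\dots<t_l$ is a $\delta$-instance of $M$ if there is a bijection $f$ from the vertices of $S$ to $V_M$ with $f(w_i)=u'_i$ and $f(x_i)=v'_i$ for all $i$, and $t_l-t_1\le\delta$. $C_M$ denotes the number of $\delta$-instances of $M$ in $\varGamma$. For $e\in E_\varGamma$, $\eta(e)$ is the number of $\delta$-instances of $M$ containing $e$. *)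

(* Defs.v *)
From HB Require Import structures.
From mathcomp Require Import all_boot all_order all_algebra.
Set Implicit Arguments. Unset Strict Implicit. Unset Printing Implicit Defensive.
Import Order.TTheory GRing.Theory Num.Theory.
Local Open Scope ring_scope.

Section TemporalMotifs.
Variable R : realFieldType.
Variable V : finType.
Variable m : nat.
Variable E : 'I_m -> V * V * R.
Variable VM : finType.
Variable l : nat.
Variable M : 'I_l -> VM * VM.
Variable delta : R.

Definition esrc (i : 'I_m) : V := (E i).1.1.
Definition edst (i : 'I_m) : V := (E i).1.2.
Definition etime (i : 'I_m) : R := (E i).2.

Definition temporal_graph : Prop :=
  (forall i, 0 < etime i) /\ injective etime.

Definition motif_adj : rel VM :=
  fun x y => [exists i : 'I_l, (M i == (x, y)) || (M i == (y, x))].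
Definition motif_connected : Prop := forall x y : VM, connect motif_adj x y.

Definition inst_verts (s : {ffun 'I_l -> 'I_m}) : {set V} :=
  [set w | [exists i : 'I_l, (w == esrc (s i)) || (w == edst (s i))]].

(* s is a delta-instance of M (decidable: everything ranges over finite types). *)
Definition is_instance (s : {ffun 'I_l -> 'I_m}) : bool :=
  [&& [forall i : 'I_l, forall j : 'I_l, (i < j)%N ==> (etime (s i) < etime (s j))],
      [exists f : {ffun V -> VM},
        [&& [forall x in inst_verts s, forall y in inst_verts s,
               (f x == f y) ==> (x == y)],
            f @: inst_verts s == [set: VM] &
            [forall i : 'I_l,
               (f (esrc (s i)) == (M i).1) && (f (edst (s i)) == (M i).2)]]] &
      [forall i : 'I_l, forall j : 'I_l,
         [&& val i == 0%N & val j == l.-1] ==> (etime (s j) - etime (s i) <= delta)]].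

Definition instances : {set {ffun 'I_l -> 'I_m}} := [set s | is_instance s].

Definition count_CM : nat := #|instances|.

Definition eta (e : 'I_m) : nat := #|[set s in instances | e \in codom s]|.

(* Sampling: X e = true iff edge e is kept; keep each edge independently w.p. p. *)
Definition sample_weight (p : R) (X : {ffun 'I_m -> bool}) : R :=
  \prod_(e < m) (if X e then p else 1 - p).

Definition Pr (p : R) (A : pred {ffun 'I_m -> bool}) : R :=
  \sum_(X | A X) sample_weight p X.

Definition estimator (p : R) (X : {ffun 'I_m -> bool}) : R :=
  (p * l%:R)^-1 * \sum_(e < m | X e) (eta e)%:R.

End TemporalMotifs.

(* Main.v *)
Require Import Defs.
From HB Require Import structures.
From mathcomp Require Import all_boot all_order all_algebra.
From mathcomp Require Import ring zify.
Import Order.TTheory GRing.Theory Num.Theory.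

Set Implicit Arguments.
Section Comb.
Variables (R : realFieldType) (V : finType) (m : nat) (E : 'I_m -> V * V * R)
  (VM : finType) (l : nat) (M : 'I_l -> VM * VM) (delta : R).

Lemma inst_inj s : s \in instances E M delta -> injective s.
Proof.
rewrite inE => /and3P [/forallP H _ _] i j eqij.
case: (ltngtP i j) => [lt|lt|/val_inj //]; exfalso.
- move: (H i) => /forallP /(_ j); rewrite lt /= eqij.
  by rewrite Order.POrderTheory.ltxx.
- move: (H j) => /forallP /(_ i); rewrite lt /= eqij.
  by rewrite Order.POrderTheory.ltxx.
Qed.

Lemma sum_eta : (\sum_(e < m) Defs.eta E M delta e = l * count_CM E M delta)%N.
Proof.
rewrite /Defs.eta /count_CM.
transitivity (\sum_(e < m) \sum_(s in instances E M delta) (e \in codom s : nat))%N.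
  apply: eq_bigr => e _; rewrite -sum1_card big_mkcond /=.
  rewrite [RHS]big_mkcond /=; apply: eq_bigr => s _.
  by rewrite inE; case: (s \in _); case: (e \in _).
rewrite exchange_big /= mulnC -sum_nat_const; apply: eq_bigr => s Hs.
transitivity (#|codom s|); last by rewrite (card_codom (inst_inj Hs)) card_ord.
rewrite -sum1_card big_mkcond /=.
by rewrite [RHS]big_mkcond; apply: eq_bigr => e _; case: (e \in _).
Qed.

Lemma eta_le e : (Defs.eta E M delta e <= count_CM E M delta)%N.
Proof. by apply: subset_leq_card; apply/subsetP => s; rewrite inE => /andP[]. Qed.

End Comb.
Local Open Scope ring_scope.

Section Prob.
Variables (R : realFieldType) (m : nat) (p : R).

Lemma prod_sum (F : 'I_m -> bool -> R) :
  \sum_(X : {ffun 'I_m -> bool}) \prod_i F i (X i) = \prod_i (F i true + F i false).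
Proof. by rewrite -bigA_distr_bigA; apply: eq_bigr => i _; rewrite big_bool. Qed.

Lemma prod1 (e : 'I_m) (x : R) : \prod_i (if i == e then x else 1) = x.
Proof. by rewrite (bigD1 e) //= eqxx big1 ?mulr1 // => i /negbTE ->. Qed.

Definition wt (b : bool) : R := if b then p else 1 - p.

Lemma wt_sum1 : \sum_(X : {ffun 'I_m -> bool}) sample_weight p X = 1.
Proof.
rewrite /sample_weight (prod_sum (fun _ b => wt b)) big1 // => i _.
by rewrite /wt addrC subrK.
Qed.

Lemma moment (e f : 'I_m) :
  \sum_(X : {ffun 'I_m -> bool}) sample_weight p X * (((X e)%:R - p) * ((X f)%:R - p))
  = if e == f then p * (1 - p) else 0.
Proof.
transitivity (\sum_(X : {ffun 'I_m -> bool}) \prod_i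
   (wt (X i) * ((if i == e then (X i)%:R - p else 1) * (if i == f then (X i)%:R - p else 1)))).
  apply: eq_bigr => X _; rewrite big_split big_split /=.
  rewrite -(prod1 e ((X e)%:R - p)) -(prod1 f ((X f)%:R - p)).
  by congr (_ * (_ * _)); apply: eq_bigr => i _; case: eqP => // ->.
rewrite (prod_sum (fun i b => wt b * ((if i == e then b%:R - p else 1) *
   (if i == f then b%:R - p else 1)))).
case: eqP => [<-|/eqP nef].
  rewrite (bigD1 e) //= eqxx big1 ?mulr1 => [|i /negbTE ->]; last first.
    by rewrite /wt !mulr1 addrC subrK.
  rewrite /wt /=; ring.
rewrite (bigD1 e) //= eqxx (negbTE nef) /wt /=.
suff -> : p * ((1 - p) * 1) + (1 - p) * ((0 - p) * 1) = 0 by rewrite mul0r.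
ring.
Qed.

End Prob.

Theorem theorem3 (R : realFieldType) (V : finType) (m : nat)
  (E : 'I_m -> V * V * R) (VM : finType) (l : nat) (M : 'I_l -> VM * VM)
  (delta : R) (p eps : R) :
  temporal_graph E ->
  (0 < l)%N -> motif_connected M ->
  0 <= delta ->
  0 < p -> p <= 1 -> 0 < eps ->
  (0 < count_CM E M delta)%N ->
  Pr p (fun X => eps * (count_CM E M delta)%:R
                 <= `|estimator E M delta p X - (count_CM E M delta)%:R|)
  <= (1 - p) / (p * eps ^+ 2).
Proof.
move=> _ l0 _ _ p0 p1 e0 C0.
set Cn := count_CM E M delta.
set C : R := Cn%:R.
set et := Defs.eta E M delta.
set a := fun e : 'I_m => (p * l%:R)^-1 * (et e)%:R.
have lR : 0 < (l%:R : R) by rewrite ltr0n.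
have CR : 0 < C by rewrite ltr0n.
have w0 X : 0 <= sample_weight p X.
  apply: prodr_ge0 => i _; case: (X i); rewrite ?subr_ge0 //; exact: ltW.
have HY X : estimator E M delta p X - C = \sum_e a e * ((X e)%:R - p).
  have -> : estimator E M delta p X = \sum_e a e * (X e)%:R.
    rewrite /estimator big_mkcond mulr_sumr; apply: eq_bigr => e _.
    by rewrite /a; case: (X e); rewrite ?mulr1 ?mulr0.
  have -> : C = \sum_e a e * p.
    rewrite /a -mulr_suml -mulr_sumr -natr_sum.
    rewrite sum_eta natrM -/Cn -/C.
    by field; apply/andP; split; rewrite gt_eqF.
  by rewrite -sumrB; apply: eq_bigr => e _; rewrite mulrBr.
have Var : \sum_X sample_weight p X * (estimator E M delta p X - C) ^+ 2
      = \sum_e a e ^+ 2 * (p * (1 - p)).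
  transitivity (\sum_X \sum_e \sum_f a e * a f *
      (sample_weight p X * (((X e)%:R - p) * ((X f)%:R - p)))).
    apply: eq_bigr => X _; rewrite HY expr2 mulr_suml mulr_sumr.
    apply: eq_bigr => e _; rewrite mulr_sumr mulr_sumr; apply: eq_bigr => f _.
    ring.
  rewrite exchange_big; apply: eq_bigr => e _ /=.
  rewrite exchange_big /=.
  rewrite (bigD1 e) //= -mulr_sumr moment eqxx big1 ?addr0; first by rewrite expr2.
  by move=> f /negbTE nef; rewrite -mulr_sumr moment eq_sym nef mulr0.
have Sn : (\sum_(e < m) et e * et e <= l * l * (Cn * Cn))%N.
  apply: (@leq_trans (\sum_(e < m) Cn * et e)).
    by apply: leq_sum => e _; rewrite leq_mul2r eta_le orbT.
  rewrite -big_distrr /= sum_eta -/Cn.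
  have : (1 <= l)%N by [].
  nia.
set S : R := (\sum_(e < m) et e * et e)%:R.
have SR : S <= (l%:R) ^+ 2 * C ^+ 2.
  rewrite /S -!natrX -natrM ler_nat; apply: (leq_trans Sn); rewrite !(expnS, expn0, muln1); nia.
have S0 : 0 <= S by rewrite ler0n.
have Var2 : \sum_e a e ^+ 2 * (p * (1 - p)) = S * ((1 - p) / (p * l%:R ^+ 2)).
  rewrite /S natr_sum mulr_suml; apply: eq_bigr => e _.
  rewrite /a natrM; field; apply/andP; split; rewrite gt_eqF //.
have eC : 0 < eps * C by rewrite mulr_gt0.
apply: (@le_trans _ _ (\sum_X sample_weight p X *
     ((estimator E M delta p X - C) ^+ 2 / (eps * C) ^+ 2))).
  rewrite /Pr [X in _ <= X](bigID (fun X => eps * C <= `|estimator E M delta p X - C|)) /=.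
  rewrite -[X in X <= _]addr0; apply: lerD; last first.
    apply: sumr_ge0 => X _; apply: mulr_ge0 => //.
    by apply: divr_ge0; rewrite ?sqr_ge0.
  apply: ler_sum => X HX; apply: ler_peMr => //.
  rewrite ler_pdivlMr ?exprn_gt0 // mul1r -(real_normK (num_real (_ - _))).
  by rewrite !expr2 ler_pM // ltW.
rewrite (eq_bigr (fun X => (sample_weight p X * (estimator E M delta p X - C) ^+ 2)
    / (eps * C) ^+ 2)); last by move=> X _; rewrite mulrA.
rewrite -mulr_suml Var Var2.
have -> : S * ((1 - p) / (p * l%:R ^+ 2)) / (eps * C) ^+ 2
   = (S / (l%:R ^+ 2 * C ^+ 2)) * ((1 - p) / (p * eps ^+ 2)).
  by field; rewrite !gt_eqF.
apply: ler_piMl.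
  by apply: divr_ge0; rewrite ?subr_ge0 // mulr_ge0 ?sqr_ge0 // ltW.
by rewrite ler_pdivrMr ?mul1r // mulr_gt0 // exprn_gt0.
Qed.
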